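(* Let $(X,d)$ be a Hadamard space, $\|\cdot\|$ a norm on $\mathbb R^s$, and $f:\mathbb R^s\to X$ Lipschitz with constant $C>0$, i.e. $d(f(t),f(u))\le C\|t-u\|$. Let $S$ be the barycentric scheme on $X$ of a mask $\mathbf a$ with $\operatorname{supp}(\mathbf a)\subseteq\{v\in\mathbb R^s:\|v\|\le r\}$, and suppose $S$ is convergent. For $h>0$ let $x_i=f(hi)$, $i\in\mathbb Z^s$ (assume $x$ bounded). Then $$\sup_{t\in\mathbb R^s}d\big(S^\infty x(t/h),f(t)\big)\le rCh.$$
   Context: Hadamard space: complete metric space $(X,d)$ such that for any $x_0,x_1\in X$ there is $y$ with $d(z,y)^2\le\frac12d(z,x_0)^2+\frac12d(z,x_1)^2-\frac14d(x_0,x_1)^2$ for all $z$. Mask: finitely supported nonnegative $(a_i)_{i\in\mathbb Z^s}$ with $\sum_ja_{i-2j}=1$ for all $i$. Barycentric scheme: $Sx_i=\operatorname{argmin}_{y\in X}\sum_ja_{i-2j}d^2(x_j,y)$. $S$ convergent means: for every bounded $x$ there is a continuous $S^\infty x:\mathbb R^s\to X$ with $\sup_jd(S^\infty x(j/2^n),(S^nx)_j)\to0$ as $n\to\infty$. *)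

(* Defs.v *)
From Stdlib Require Import Reals Lra ZArith List.
From Stdlib Require Fin.
Open Scope R_scope.

Definition Rs (s : nat) := Fin.t s -> R.
Definition Zs (s : nat) := Fin.t s -> Z.

Definition is_metric {X : Type} (d : X -> X -> R) : Prop :=
  (forall x y, d x y = 0 <-> x = y) /\
  (forall x y, d x y = d y x) /\
  (forall x y z, d x z <= d x y + d y z).

Definition cauchy_seq {X : Type} (d : X -> X -> R) (u : nat -> X) : Prop :=
  forall eps, 0 < eps -> exists N, forall m n, (N <= m)%nat -> (N <= n)%nat ->
    d (u m) (u n) < eps.

Definition seq_converges_to {X : Type} (d : X -> X -> R) (u : nat -> X) (l : X) : Prop :=
  forall eps, 0 < eps -> exists N, forall n, (N <= n)%nat -> d (u n) l < eps.

Definition complete {X : Type} (d : X -> X -> R) : Prop :=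
  forall u, cauchy_seq d u -> exists l, seq_converges_to d u l.

(* Hadamard space: complete metric space with the midpoint (CAT(0)) inequality. *)
Definition hadamard_space {X : Type} (d : X -> X -> R) : Prop :=
  is_metric d /\ complete d /\
  forall x0 x1 : X, exists y : X, forall z : X,
    (d z y)^2 <= / 2 * (d z x0)^2 + / 2 * (d z x1)^2 - / 4 * (d x0 x1)^2.

Definition vsub {s} (t u : Rs s) : Rs s := fun c => t c - u c.
Definition vscal {s} (l : R) (t : Rs s) : Rs s := fun c => l * t c.

Definition is_norm {s : nat} (N : Rs s -> R) : Prop :=
  (forall v, N v = 0 -> forall c, v c = 0) /\
  (forall l v, N (vscal l v) = Rabs l * N v) /\
  (forall v w, N (fun c => v c + w c) <= N v + N w).

Definition zsub2 {s} (i j : Zs s) : Zs s := fun c => (i c - 2 * j c)%Z.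

Definition finitely_supported {s} (a : Zs s -> R) : Prop :=
  exists L : list (Zs s), forall k, a k <> 0 -> In k L.

(* J is a duplicate-free finite list containing every j with a_{i-2j} <> 0;
   sums over such J are the (finite) sums  sum_{j in Z^s} a_{i-2j} G(j). *)
Definition covers {s} (a : Zs s -> R) (i : Zs s) (J : list (Zs s)) : Prop :=
  NoDup J /\ forall j, a (zsub2 i j) <> 0 -> In j J.

Definition wsum {s} (a : Zs s -> R) (i : Zs s) (J : list (Zs s)) (G : Zs s -> R) : R :=
  fold_right Rplus 0 (map (fun j => a (zsub2 i j) * G j) J).

Definition is_mask {s} (a : Zs s -> R) : Prop :=
  finitely_supported a /\ (forall k, 0 <= a k) /\
  forall i J, covers a i J -> wsum a i J (fun _ => 1) = 1.

Definition is_argmin_at {X : Type} (d : X -> X -> R) {s} (a : Zs s -> R)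
    (x : Zs s -> X) (i : Zs s) (y : X) : Prop :=
  forall J, covers a i J -> forall z : X,
    wsum a i J (fun j => (d (x j) y)^2) <= wsum a i J (fun j => (d (x j) z)^2).

Definition bary_step {X : Type} (d : X -> X -> R) {s} (a : Zs s -> R)
    (x y : Zs s -> X) : Prop :=
  forall i, is_argmin_at d a x i (y i).

Definition bary_iterates {X : Type} (d : X -> X -> R) {s} (a : Zs s -> R)
    (x : Zs s -> X) (xs : nat -> Zs s -> X) : Prop :=
  xs O = x /\ forall n, bary_step d a (xs n) (xs (S n)).

Definition bounded_data {X : Type} (d : X -> X -> R) {s} (x : Zs s -> X) : Prop :=
  exists z M, forall j, d (x j) z <= M.

Definition continuous_map {X : Type} (d : X -> X -> R) {s} (g : Rs s -> X) : Prop :=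
  forall t eps, 0 < eps -> exists delta, 0 < delta /\
    forall u, (forall c, Rabs (u c - t c) < delta) -> d (g u) (g t) < eps.

Definition dyadic {s} (n : nat) (j : Zs s) : Rs s := fun c => IZR (j c) / 2 ^ n.

Definition is_limit_function {X : Type} (d : X -> X -> R) {s}
    (xs : nat -> Zs s -> X) (g : Rs s -> X) : Prop :=
  continuous_map d g /\
  forall eps, 0 < eps -> exists N, forall n, (N <= n)%nat ->
    forall j, d (g (dyadic n j)) (xs n j) <= eps.

Definition scheme_convergent {X : Type} (d : X -> X -> R) {s} (a : Zs s -> R) : Prop :=
  forall x xs, bounded_data d x -> bary_iterates d a x xs ->
    exists g, is_limit_function d xs g.

(* Main.v *)
Require Import Defs.
From Stdlib Require Import Reals Lra Lia ZArith List Classical.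
From Stdlib Require Fin.
From Stdlib Require Import ClassicalEpsilon FunctionalExtensionality.
Open Scope R_scope.

Section Metric.
Context {X : Type} (d : X -> X -> R) (Hm : is_metric d).
Lemma d_refl x : d x x = 0.
Proof. destruct Hm as [H _]. apply H; reflexivity. Qed.
Lemma d_sym x y : d x y = d y x.
Proof. destruct Hm as [_ [H _]]. apply H. Qed.
Lemma d_tri x y z : d x z <= d x y + d y z.
Proof. destruct Hm as [_ [_ H]]. apply H. Qed.
Lemma d_nonneg x y : 0 <= d x y.
Proof. pose proof (d_tri x y x). rewrite d_refl, (d_sym y x) in H. lra. Qed.
End Metric.

Section WS.
Context {s : nat} (a : Zs s -> R) (i : Zs s).
Lemma wsum_mono J G1 G2 : (forall k, 0 <= a k) ->
  (forall j, a (zsub2 i j) <> 0 -> G1 j <= G2 j) -> wsum a i J G1 <= wsum a i J G2.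
Proof.
  intros Hp HG. induction J as [|j J IH]; unfold wsum in *; simpl; [lra|].
  destruct (Req_dec (a (zsub2 i j)) 0) as [E|E].
  - rewrite E. lra.
  - pose proof (HG j E). pose proof (Hp (zsub2 i j)).
    apply Rplus_le_compat; [apply Rmult_le_compat_l|]; auto.
Qed.
Lemma wsum_lin J al be ga G H :
  wsum a i J (fun j => al * G j + be * H j + ga) =
  al * wsum a i J G + be * wsum a i J H + ga * wsum a i J (fun _ => 1).
Proof. induction J as [|j J IH]; unfold wsum in *; simpl; [ring|]. rewrite IH. ring. Qed.
Lemma wsum_const J c : wsum a i J (fun _ => c) = c * wsum a i J (fun _ => 1).
Proof. induction J as [|j J IH]; unfold wsum in *; simpl; [ring|]. rewrite IH. ring. Qed.
Lemma wsum_ex J : wsum a i J (fun _ => 1) = 1 -> exists j, a (zsub2 i j) <> 0.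
Proof.
  intros H. destruct (classic (exists j, a (zsub2 i j) <> 0)) as [E|E]; auto.
  exfalso. assert (wsum a i J (fun _ => 1) = 0).
  { clear H. induction J as [|j J IH]; unfold wsum in *; simpl; [ring|]. rewrite IH.
    destruct (Req_dec (a (zsub2 i j)) 0) as [E'|E']; [rewrite E'; ring|].
    exfalso; apply E; exists j; exact E'. }
  lra.
Qed.
End WS.

Lemma cover_exists {s} (a : Zs s -> R) (i : Zs s) : finitely_supported a ->
  exists J, covers a i J.
Proof.
  intros [L HL].
  set (dec := fun x y : Zs s => excluded_middle_informative (x = y)).
  exists (nodup dec (map (fun k => fun c => ((i c - k c) / 2)%Z) L)).
  split; [apply NoDup_nodup|].
  intros j Hj. apply nodup_In. apply HL in Hj.
  apply (in_map (fun k => fun c => ((i c - k c) / 2)%Z)) in Hj.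
  replace j with (fun c => ((i c - zsub2 i j c) / 2)%Z); auto.
  apply functional_extensionality; intro c. unfold zsub2.
  replace (i c - (i c - 2 * j c))%Z with (j c * 2)%Z by ring.
  apply Z.div_mul. lia.
Qed.

Lemma geod {X : Type} (d : X -> X -> R) (HX : hadamard_space d) (y p : X) (k : nat) :
  exists m, forall z, (d z m)^2 <= (1 - / 2^k) * (d z y)^2 + / 2^k * (d z p)^2
     - / 2^k * (1 - / 2^k) * (d y p)^2.
Proof.
  destruct HX as [Hm [_ Hmid]].
  induction k as [|k [m Hmk]].
  - exists p. intro z. simpl. rewrite Rinv_1. lra.
  - set (l := / 2^k) in *.
    assert (Hl : 0 < l <= 1).
    { unfold l. split. apply Rinv_0_lt_compat, pow_lt; lra.
      rewrite <- Rinv_1. apply Rinv_le_contravar; [lra|]. 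
      rewrite <- (pow1 k). apply pow_incr. lra. }
    set (D := d y p).
    assert (HD : 0 <= D) by (apply (d_nonneg d Hm)).
    pose proof (Hmk p) as Hp. rewrite (d_refl d Hm), (d_sym d Hm p y) in Hp. fold D in Hp.
    assert (Hpm : d p m <= (1 - l) * D).
    { pose proof (d_nonneg d Hm p m).
      assert (H0 : 0 <= (1 - l) * D) by nra.
      destruct (Rle_lt_dec (d p m) ((1 - l) * D)) as [|Hlt]; auto. exfalso.
      assert (((1 - l) * D)^2 < (d p m)^2).
      { nra. }
      assert (((1 - l) * D)^2 = (1 - l) * D^2 + l * 0^2 - l * (1 - l) * D^2) by ring.
      lra. }
    assert (Hym : l * D <= d y m).
    { pose proof (d_tri d Hm y m p). rewrite (d_sym d Hm m p) in H. fold D in H. nra. }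
    assert (Hym2 : (l * D)^2 <= (d y m)^2).
    { apply pow_incr. split; [nra|exact Hym]. }
    destruct (Hmid y m) as [m' Hm'].
    exists m'. intro z. specialize (Hm' z). specialize (Hmk z).
    assert (E : / 2 ^ S k = l / 2) by (unfold l; simpl; field; apply pow_nonzero; lra).
    rewrite E. fold D in Hmk |- *. lra.
Qed.

Lemma ball {X : Type} (d : X -> X -> R) (HX : hadamard_space d) {s} (a : Zs s -> R)
  (Ha : is_mask a) (x : Zs s -> X) (i : Zs s) (y p : X) (R0 : R) :
  is_argmin_at d a x i y ->
  (forall j, a (zsub2 i j) <> 0 -> d (x j) p <= R0) -> d y p <= R0.
Proof.
  intros Hy Hb. pose proof HX as [Hm _].
  destruct Ha as [Hfs [Hpos Hsum]].
  destruct (cover_exists a i Hfs) as [J HJ].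
  pose proof (Hsum i J HJ) as H1.
  destruct (wsum_ex a i J H1) as [j0 Hj0].
  assert (HR : 0 <= R0) by (pose proof (Hb j0 Hj0); pose proof (d_nonneg d Hm (x j0) p); lra).
  set (D := d y p).
  assert (HD : 0 <= D) by apply (d_nonneg d Hm).
  set (F := wsum a i J (fun j => (d (x j) y)^2)).
  assert (HF : 0 <= F).
  { assert (wsum a i J (fun _ => 0) <= F) by (apply wsum_mono; auto; intros; apply pow2_ge_0).
    rewrite wsum_const in H. lra. }
  assert (HW : wsum a i J (fun j => (d (x j) p)^2) <= R0^2).
  { assert (wsum a i J (fun j => (d (x j) p)^2) <= wsum a i J (fun _ => R0^2)).
    { apply wsum_mono; auto. intros j Hj. apply pow_incr. split. apply (d_nonneg d Hm). auto. }
    rewrite wsum_const, H1 in H. lra. }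
  assert (Hk : forall k, (1 - / 2^k) * D^2 <= R0^2).
  { intro k. destruct (geod d HX y p k) as [m Hmz].
    set (l := / 2^k) in *.
    assert (Hl : 0 < l) by (unfold l; apply Rinv_0_lt_compat, pow_lt; lra).
    pose proof (Hy J HJ m) as Hym. fold F in Hym.
    assert (wsum a i J (fun j => (d (x j) m)^2) <=
       wsum a i J (fun j => (1 - l) * (d (x j) y)^2 + l * (d (x j) p)^2 + (- (l * (1 - l) * D^2)))).
    { apply wsum_mono; [auto|]. intros j _. specialize (Hmz (x j)). fold D in Hmz. lra. }
    rewrite wsum_lin, H1 in H. fold F in H.
    assert (l * (F - R0^2 + (1 - l) * D^2) <= 0) by nra.
    assert (F - R0^2 + (1 - l) * D^2 <= 0).
    { destruct (Rle_lt_dec (F - R0^2 + (1 - l) * D^2) 0); auto. nra. }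
    lra. }
  assert (HD2 : D^2 <= R0^2).
  { destruct (Rle_lt_dec (D^2) (R0^2)) as [|Hlt]; auto. exfalso.
    assert (HDp : 0 < D^2) by nra.
    assert (Habs : Rabs (/2) < 1) by (rewrite Rabs_pos_eq; lra).
    destruct (pow_lt_1_zero (/2) Habs ((D^2 - R0^2) / D^2)) as [N HN].
    { apply Rdiv_lt_0_compat; lra. }
    specialize (HN N (le_n N)). rewrite pow_inv in HN.
    rewrite Rabs_pos_eq in HN by (apply Rlt_le, Rinv_0_lt_compat, pow_lt; lra).
    specialize (Hk N).
    assert (/ 2^N * D^2 < D^2 - R0^2).
    { apply (Rmult_lt_compat_r (D^2)) in HN; auto. unfold Rdiv in HN.
      rewrite Rmult_assoc, Rinv_l in HN by lra. lra. }
    nra. }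
  fold D. nra.
Qed.

Fixpoint all_fin (n : nat) : list (Fin.t n) :=
  match n with O => nil | S m => Fin.F1 :: map Fin.FS (all_fin m) end.
Lemma all_fin_In n (c : Fin.t n) : In c (all_fin n).
Proof. induction c; simpl; [left; auto|right; apply in_map; auto]. Qed.

Section Norm.
Context {s : nat} (N : Rs s -> R) (HN : is_norm N).
Lemma N_ext v w : (forall c, v c = w c) -> N v = N w.
Proof. intros H. f_equal. apply functional_extensionality; auto. Qed.
Lemma N_zero : N (fun _ => 0) = 0.
Proof.
  destruct HN as [_ [Hs _]].
  rewrite (N_ext _ (vscal 0 (fun _ => 0))) by (intro; unfold vscal; ring).
  rewrite Hs, Rabs_R0. ring.
Qed.
Lemma N_nonneg v : 0 <= N v.
Proof.
  destruct HN as [_ [Hs Ht]].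
  pose proof (Ht v (vscal (-1) v)).
  rewrite (N_ext _ (fun _ => 0)) in H by (intro; unfold vscal; ring).
  rewrite N_zero, Hs in H. assert (E : Rabs (-1) = 1) by (unfold Rabs; destruct Rcase_abs; lra). rewrite E in H. lra.
Qed.
Definition ebas (c' : Fin.t s) : Rs s := fun c => if Fin.eq_dec c c' then 1 else 0.
Definition restr (L : list (Fin.t s)) (v : Rs s) : Rs s :=
  fun c => if in_dec Fin.eq_dec c L then v c else 0.
Definition sumN (L : list (Fin.t s)) := fold_right (fun c acc => N (ebas c) + acc) 0 L.
Lemma sumN_nonneg L : 0 <= sumN L.
Proof. induction L; simpl; [lra|]. pose proof (N_nonneg (ebas a)). lra. Qed.
Lemma restr_bound L v B : 0 <= B -> (forall c, Rabs (v c) <= B) ->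
  N (restr L v) <= B * sumN L.
Proof.
  intros HB Hv. destruct HN as [_ [Hs Ht]].
  induction L as [|c L IH]; simpl.
  - rewrite (N_ext _ (fun _ => 0)) by (intro; reflexivity). rewrite N_zero. lra.
  - pose proof (N_nonneg (ebas c)).
    destruct (in_dec Fin.eq_dec c L) as [Hin|Hnin].
    + rewrite (N_ext _ (restr L v)).
      * nra.
      * intro c'. unfold restr.
        destruct (in_dec Fin.eq_dec c' (c :: L)) as [H1|H1];
        destruct (in_dec Fin.eq_dec c' L) as [H2|H2]; auto.
        -- exfalso. destruct H1; subst; auto.
        -- exfalso. apply H1. right; auto.
    + rewrite (N_ext _ (fun c' => restr L v c' + vscal (v c) (ebas c) c')).
      * eapply Rle_trans; [apply Ht|]. rewrite Hs.
        pose proof (Hv c). nra.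
      * intro c'. unfold restr, vscal, ebas.
        destruct (in_dec Fin.eq_dec c' (c :: L)) as [H1|H1];
        destruct (in_dec Fin.eq_dec c' L) as [H2|H2];
        destruct (Fin.eq_dec c' c) as [H3|H3]; subst; try ring.
        -- contradiction.
        -- destruct H1; [subst; contradiction|contradiction].
        -- exfalso; apply H1; left; auto.
        -- exfalso; apply H1; right; auto.
        -- exfalso; apply H1; left; auto.
Qed.
Lemma norm_bound : exists K, 0 <= K /\ forall v B, 0 <= B ->
  (forall c, Rabs (v c) <= B) -> N v <= K * B.
Proof.
  exists (sumN (all_fin s)). split; [apply sumN_nonneg|].
  intros v B HB Hv. rewrite (N_ext v (restr (all_fin s) v)).
  - rewrite Rmult_comm. apply restr_bound; auto.
  - intro c. unfold restr. destruct (in_dec Fin.eq_dec c (all_fin s)); auto.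
    exfalso; apply n, all_fin_In.
Qed.
End Norm.

Theorem mainTheorem8 (X : Type) (d : X -> X -> R) (s : nat) (N : Rs s -> R)
  (f : Rs s -> X) (C r h : R) (a : Zs s -> R)
  (HX : hadamard_space d) (HN : is_norm N)
  (HC : 0 < C) (Hf : forall t u, d (f t) (f u) <= C * N (vsub t u))
  (Ha : is_mask a) (Hsupp : forall k, a k <> 0 -> N (fun c => IZR (k c)) <= r)
  (Hconv : scheme_convergent d a) (Hh : 0 < h)
  (x : Zs s -> X) (Hx : forall i, x i = f (fun c => h * IZR (i c)))
  (Hxb : bounded_data d x)
  (xs : nat -> Zs s -> X) (Hxs : bary_iterates d a x xs)
  (g : Rs s -> X) (Hg : is_limit_function d xs g) :
  forall t : Rs s, d (g (fun c => t c / h)) (f t) <= r * C * h.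
Proof.
  intro t. pose proof HX as [Hm _].
  assert (Hr : 0 <= r).
  { pose proof Ha as [Hfs [_ Hsum]].
    destruct (cover_exists a (fun _ => 0%Z) Hfs) as [J HJ].
    destruct (wsum_ex a _ J (Hsum _ J HJ)) as [j0 Hj0].
    pose proof (Hsupp _ Hj0). pose proof (N_nonneg N HN (fun c => IZR (zsub2 (fun _ => 0%Z) j0 c))).
    lra. }
  set (P := fun (n : nat) (j : Zs s) => fun c => h * IZR (j c) / 2^n).
  assert (He : forall n j, d (xs n j) (f (P n j)) <= r * C * h * (1 - / 2^n)).
  { destruct Hxs as [H0 Hst]. induction n as [|n IH]; intro i.
    - rewrite H0, Hx. replace (P 0%nat i) with (fun c => h * IZR (i c)).
      + rewrite (d_refl d Hm). simpl. rewrite Rinv_1. lra.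
      + apply functional_extensionality; intro c. unfold P. simpl. field.
    - apply (ball d HX a Ha (xs n) i); [apply Hst|].
      intros j Hj.
      eapply Rle_trans; [apply (d_tri d Hm _ (f (P n j)))|].
      eapply Rle_trans; [apply Rplus_le_compat; [apply IH|apply Hf]|].
      assert (Hq : 0 < 2^n) by (apply pow_lt; lra).
      assert (Ev : N (vsub (P n j) (P (S n) i)) =
                   N (vscal (- (h / 2^(S n))) (fun c => IZR (zsub2 i j c)))).
      { apply N_ext. intro c. unfold vsub, vscal, P, zsub2. rewrite minus_IZR, mult_IZR.
        simpl. field. lra. }
      rewrite Ev. destruct HN as [_ [Hs _]]. rewrite Hs.
      rewrite Rabs_Ropp, Rabs_pos_eq.
      2: { apply Rlt_le, Rdiv_lt_0_compat; [lra|apply pow_lt; lra]. }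
      pose proof (Hsupp _ Hj).
      assert (E2 : / 2^(S n) = / 2^n / 2) by (simpl; field; lra).
      assert (Hpos : 0 < h / 2^(S n)) by (apply Rdiv_lt_0_compat; [lra|apply pow_lt; lra]).
      assert (h / 2 ^ S n * N (fun c => IZR (zsub2 i j c)) <= h / 2^(S n) * r)
        by (apply Rmult_le_compat_l; lra).
      unfold Rdiv in *. rewrite E2 in *.
      assert (C * (h * (/ 2 ^ n * / 2) * N (fun c => IZR (zsub2 i j c)))
              <= C * (h * (/ 2 ^ n * / 2) * r)) by (apply Rmult_le_compat_l; lra).
      nra. }
  destruct (norm_bound N HN) as [K [HK HKb]].
  apply Rle_plus_epsilon. intros eps3 Heps3.
  set (eps := eps3 / 3).
  assert (Heps : 0 < eps) by (unfold eps; lra).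
  destruct Hg as [Hcont Hlim].
  destruct (Hcont (fun c => t c / h) eps Heps) as [delta [Hdelta Hc]].
  destruct (Hlim eps Heps) as [N0 HN0].
  set (m := Rmin delta (eps / (C * K * h + 1))).
  assert (Hmp : 0 < m).
  { unfold m. apply Rmin_pos; auto. apply Rdiv_lt_0_compat; auto.
    assert (0 <= C * K * h) by (apply Rmult_le_pos; [apply Rmult_le_pos|]; lra). lra. }
  assert (Habs : Rabs (/2) < 1) by (rewrite Rabs_pos_eq; lra).
  destruct (pow_lt_1_zero (/2) Habs m Hmp) as [N1 HN1].
  set (n := Nat.max N0 N1).
  specialize (HN1 n (Nat.le_max_r _ _)).
  rewrite pow_inv in HN1.
  assert (Hq : 0 < 2^n) by (apply pow_lt; lra).
  rewrite Rabs_pos_eq in HN1 by (apply Rlt_le, Rinv_0_lt_compat; auto).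
  set (j := fun c => (up (2^n * t c / h) - 1)%Z).
  assert (Hj : forall c, Rabs (IZR (j c) / 2^n - t c / h) < / 2^n).
  { intro c. unfold j. destruct (archimed (2^n * t c / h)) as [A1 A2].
    rewrite minus_IZR.
    replace (( IZR (up (2 ^ n * t c / h)) - 1) / 2 ^ n - t c / h) with
      ((IZR (up (2 ^ n * t c / h)) - 1 - 2 ^ n * t c / h) * / 2^n) by (field; lra).
    assert (Hi : 0 < / 2^n) by (apply Rinv_0_lt_compat; auto).
    apply Rabs_def1.
    - apply (Rmult_lt_compat_r (/ 2^n)) in A1; auto. nra.
    - nra. }
  assert (Hm1 : m <= delta) by apply Rmin_l.
  assert (Hm2 : m <= eps / (C * K * h + 1)) by apply Rmin_r.
  set (u := dyadic n j).
  assert (T1 : d (g (fun c => t c / h)) (g u) < eps).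
  { rewrite (d_sym d Hm). apply Hc. intro c. unfold u, dyadic. specialize (Hj c). lra. }
  assert (T2 : d (g u) (xs n j) <= eps) by (apply HN0, Nat.le_max_l).
  assert (T3 : d (xs n j) (f (P n j)) <= r * C * h).
  { specialize (He n j).
    assert (0 <= r * C * h * / 2^n).
    { apply Rmult_le_pos; [|apply Rlt_le, Rinv_0_lt_compat; auto].
      apply Rmult_le_pos; [apply Rmult_le_pos|]; lra. }
    lra. }
  assert (T4 : d (f (P n j)) (f t) <= C * (K * (h * / 2^n))).
  { eapply Rle_trans; [apply Hf|]. apply Rmult_le_compat_l; [lra|].
    apply HKb.
    - apply Rmult_le_pos; [lra|apply Rlt_le, Rinv_0_lt_compat; auto].
    - intro c. unfold vsub, P.
      replace (h * IZR (j c) / 2 ^ n - t c) with (h * (IZR (j c) / 2^n - t c / h)) by (field; lra).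
      rewrite Rabs_mult, Rabs_pos_eq by lra.
      apply Rmult_le_compat_l; [lra|]. apply Rlt_le, Hj. }
  assert (T5 : C * (K * (h * / 2^n)) <= eps).
  { assert (Hck : 0 <= C * K * h) by (apply Rmult_le_pos; [apply Rmult_le_pos|]; lra).
    assert (C * (K * (h * / 2^n)) = (C * K * h) * / 2^n) by ring.
    rewrite H.
    assert ((C * K * h) * / 2^n <= (C * K * h) * (eps / (C * K * h + 1))).
    { apply Rmult_le_compat_l; lra. }
    assert ((C * K * h) * (eps / (C * K * h + 1)) <= eps).
    { unfold Rdiv. rewrite <- Rmult_assoc.
      apply (Rmult_le_reg_r (C * K * h + 1)); [lra|].
      rewrite Rmult_assoc, Rinv_l by lra. nra. }
    lra. }
  pose proof (d_tri d Hm (g (fun c => t c / h)) (g u) (f t)).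
  pose proof (d_tri d Hm (g u) (xs n j) (f t)).
  pose proof (d_tri d Hm (xs n j) (f (P n j)) (f t)).
  unfold eps in *. lra.
Qed.
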